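(* Let $S$ be a group and $A,B$ left $S$-acts such that there exist injective homomorphisms $A\rightarrowtail B^I$ and $B\rightarrowtail A^J$ for some sets $I,J$. Then $C\amalg A$ and $C\amalg B$ are geometrically equivalent for every left $S$-act $C$.
   Context: A left $S$-act is a nonempty set with an action $S\times A\to A$ satisfying $1a=a$, $(st)a=s(ta)$; homomorphisms preserve the action; $\amalg$ denotes coproduct (disjoint union) and $B^I$ is the cartesian power with componentwise action. For a nonempty finite set $X$, $F_X=\coprod_{x\in X}S_x$ is the free $S$-act on $X$. For an $S$-act $G$ and a relation $T\subseteq F_X\times F_X$, $T'_G=\{\mu:F_X\to G \text{ homomorphism}: T\subseteq\ker\mu\}$ and $T''_G=\bigcap_{\mu\in T'_G}\ker\mu$ (empty intersection $=F_X\times F_X$). $S$-acts $G_1,G_2$ are geometrically equivalent iff $T''_{G_1}=T''_{G_2}$ for all nonempty finite $X$ and all $T\subseteq F_X\times F_X$. *)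

(* Defs.v *)
From Stdlib Require Import List FunctionalExtensionality.

Set Implicit Arguments.

Record Group := {
  gcar :> Type;
  gmul : gcar -> gcar -> gcar;
  gone : gcar;
  ginv : gcar -> gcar;
  gmulA : forall x y z, gmul x (gmul y z) = gmul (gmul x y) z;
  gmul1l : forall x, gmul gone x = x;
  gmulVl : forall x, gmul (ginv x) x = gone
}.

Record Act (S : Group) := {
  acar :> Type;
  act : gcar S -> acar -> acar;
  act1 : forall a, act (gone S) a = a;
  actM : forall s t a, act (gmul S s t) a = act s (act t a);
  anonempty : inhabited acar
}.


Definition is_hom {S : Group} {A B : Act S} (f : A -> B) : Prop :=
  forall (s : gcar S) (a : A), f (act A s a) = act B s (f a).

Definition coprod_act_fun (S : Group) (C A : Act S) (s : gcar S) (x : C + A) : C + A :=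
  match x with inl c => inl (act C s c) | inr a => inr (act A s a) end.

Lemma coprod_act1 (S : Group) (C A : Act S) (x : C + A) :
  coprod_act_fun C A (gone S) x = x.
Proof. destruct x; simpl; rewrite act1; reflexivity. Qed.

Lemma coprod_actM (S : Group) (C A : Act S) s t (x : C + A) :
  coprod_act_fun C A (gmul S s t) x = coprod_act_fun C A s (coprod_act_fun C A t x).
Proof. destruct x; simpl; rewrite actM; reflexivity. Qed.

Lemma coprod_nonempty (S : Group) (C A : Act S) : inhabited (C + A).
Proof. destruct (anonempty C) as [c]; exact (inhabits (inl c)). Qed.

Definition coprod (S : Group) (C A : Act S) : Act S :=
  {| acar := C + A; act := coprod_act_fun C A;
     act1 := coprod_act1 C A; actM := coprod_actM C A;
     anonempty := coprod_nonempty C A |}.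

Lemma pow_act1 (S : Group) (B : Act S) (I : Type) (f : I -> B) :
  (fun i => act B (gone S) (f i)) = f.
Proof. apply functional_extensionality; intro i; apply act1. Qed.

Lemma pow_actM (S : Group) (B : Act S) (I : Type) s t (f : I -> B) :
  (fun i => act B (gmul S s t) (f i)) = (fun i => act B s (act B t (f i))).
Proof. apply functional_extensionality; intro i; apply actM. Qed.

Lemma pow_nonempty (S : Group) (B : Act S) (I : Type) : inhabited (I -> B).
Proof. destruct (anonempty B) as [b]; exact (inhabits (fun _ => b)). Qed.

Definition pow_act (S : Group) (B : Act S) (I : Type) : Act S :=
  {| acar := I -> B; act := fun s f i => act B s (f i);
     act1 := @pow_act1 S B I; actM := @pow_actM S B I;
     anonempty := pow_nonempty B I |}.

(** Free S-act on X: F_X = ⨿_{x in X} S x, elements (s, x) with t (s, x) = (t s, x). *)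
Lemma free_act1 (S : Group) (X : Type) (u : gcar S * X) :
  (gmul S (gone S) (fst u), snd u) = u.
Proof. destruct u; simpl; rewrite gmul1l; reflexivity. Qed.

Lemma free_actM (S : Group) (X : Type) s t (u : gcar S * X) :
  (gmul S (gmul S s t) (fst u), snd u) =
  (gmul S s (fst (gmul S t (fst u), snd u)), snd (gmul S t (fst u), snd u)).
Proof. destruct u; simpl; rewrite gmulA; reflexivity. Qed.

Lemma free_nonempty (S : Group) (X : Type) (x0 : inhabited X) : inhabited (gcar S * X).
Proof. destruct x0 as [x]; exact (inhabits (gone S, x)). Qed.

Definition free_act (S : Group) (X : Type) (x0 : inhabited X) : Act S :=
  {| acar := gcar S * X; act := fun s u => (gmul S s (fst u), snd u);
     act1 := @free_act1 S X; actM := @free_actM S X;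
     anonempty := free_nonempty S x0 |}.

Definition finite_type (X : Type) : Prop := exists l : list X, forall x, In x l.

Definition Tprime (S : Group) (X : Type) (x0 : inhabited X) (G : Act S)
  (T : free_act S x0 -> free_act S x0 -> Prop) (mu : free_act S x0 -> G) : Prop :=
  is_hom mu /\ forall u v, T u v -> mu u = mu v.

(** T''_G : intersection of the kernels of all mu in T'_G
    (the empty intersection is all of F_X × F_X). *)
Definition Tsecond (S : Group) (X : Type) (x0 : inhabited X) (G : Act S)
  (T : free_act S x0 -> free_act S x0 -> Prop) (u v : free_act S x0) : Prop :=
  forall mu : free_act S x0 -> G, Tprime G T mu -> mu u = mu v.

Definition geom_equiv (S : Group) (G1 G2 : Act S) : Prop :=
  forall (X : Type) (x0 : inhabited X), finite_type X ->
  forall (T : free_act S x0 -> free_act S x0 -> Prop) (u v : free_act S x0),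
    Tsecond G1 T u v <-> Tsecond G2 T u v.

(* Main.v *)
Require Import Defs.
From Stdlib Require Import Classical FunctionalExtensionality.

Section Aux.
Variables (S : Group) (A B : Act S) (I J : Type)
  (f : A -> pow_act B I) (g : B -> pow_act A J).
Hypotheses (hf : is_hom f) (fi : forall a1 a2, f a1 = f a2 -> a1 = a2)
  (hg : is_hom g) (gi : forall b1 b2, g b1 = g b2 -> b1 = b2).
Variable C : Act S.

Lemma sep_map : exists h : C + A -> C + B,
  (forall s x, h (coprod_act_fun C A s x) = coprod_act_fun C B s (h x)) /\
  (forall c, h (inl c) = inl c) /\ (forall a, exists b, h (inr a) = inr b).
Proof.
  destruct (classic (inhabited I)) as [[i0]|nI].
  - exists (fun x => match x with inl c => inl c | inr a => inr (f a i0) end).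
    split; [|split].
    + intros s [c|a]; simpl; [reflexivity|]. f_equal.
      rewrite (hf s a). reflexivity.
    + reflexivity.
    + intros a; eexists; reflexivity.
  - destruct (anonempty B) as [b0].
    assert (Asg : forall a a' : A, a = a').
    { intros a a'. apply fi. apply functional_extensionality. intro i.
      exfalso. apply nI. exact (inhabits i). }
    assert (Bsg : forall b b' : B, b = b').
    { intros b b'. apply gi. apply functional_extensionality. intro j. apply Asg. }
    exists (fun x => match x with inl c => inl c | inr _ => inr b0 end).
    split; [|split].
    + intros s [c|a]; simpl; [reflexivity|]. f_equal. apply Bsg.
    + reflexivity.
    + intros a; eexists; reflexivity.
Qed.

Lemma dir (X : Type) (x0 : inhabited X) (T : free_act S x0 -> free_act S x0 -> Prop)
  (u v : free_act S x0) :
  Tsecond (coprod C B) T u v -> Tsecond (coprod C A) T u v.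
Proof.
  intros H mu [hmu hT].
  destruct sep_map as [h [hh [hl hr]]].
  assert (Hh : h (mu u) = h (mu v)).
  { apply (H (fun w => h (mu w))). split.
    - intros s w. change (h (mu (act (free_act S x0) s w)) = coprod_act_fun C B s (h (mu w))). rewrite (hmu s w). apply hh.
    - intros a b Hab. simpl. rewrite (hT a b Hab). reflexivity. }
  assert (Hi : forall i, (match mu u with inl c => inl c | inr a => inr (f a i) end : C + B)
                       = match mu v with inl c => inl c | inr a => inr (f a i) end).
  { intro i.
    apply (H (fun w => match mu w with inl c => inl c | inr a => inr (f a i) end : coprod C B)).
    split.
    - intros s w. cbv beta. rewrite (hmu s w). simpl.
      destruct (mu w) as [c|a]; simpl; [reflexivity|]. f_equal. rewrite (hf s a). reflexivity.
    - intros a b Hab. rewrite (hT a b Hab). reflexivity. }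
  simpl in *.
  destruct (mu u) as [c|a]; destruct (mu v) as [c'|a'].
  - rewrite !hl in Hh. injection Hh as ->. reflexivity.
  - rewrite hl in Hh. destruct (hr a') as [b Hb]. rewrite Hb in Hh. discriminate.
  - rewrite hl in Hh. destruct (hr a) as [b Hb]. rewrite Hb in Hh. discriminate.
  - f_equal. apply fi. apply functional_extensionality. intro i.
    specialize (Hi i). injection Hi. auto.
Qed.
End Aux.

Theorem proposition3p19 (S : Group) (A B : Act S) (I J : Type)
  (f : A -> pow_act B I) (g : B -> pow_act A J) :
  is_hom f -> (forall a1 a2, f a1 = f a2 -> a1 = a2) ->
  is_hom g -> (forall b1 b2, g b1 = g b2 -> b1 = b2) ->
  forall C : Act S, geom_equiv (coprod C A) (coprod C B).
Proof.
  intros hf fi hg gi C X x0 _ T u v. split.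
  - apply (@dir S B A J I g f hg gi fi C).
  - apply (@dir S A B I J f g hf fi gi C).
Qed.
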